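(* Let $G$ be a group and $\iota\in G$ an element for which there is a finite normal subgroup $L\lhd G$ such that the image of $\iota$ is central in $G/L$. Let $A$ and $B$ be $\mathbb{Q}[G]$-modules with $A$ gr-odd. If $B$ is gr-odd (resp. gr-even), then both $A\otimes_{\mathbb{Q}}B$ and $\mathrm{Hom}_{\mathbb{Q}}(A,B)$ are gr-even (resp. gr-odd). The analogous statement with $A$ gr-even also holds (i.e. if $A$ is gr-even, then $A\otimes_{\mathbb{Q}}B$ and $\mathrm{Hom}_{\mathbb{Q}}(A,B)$ are gr-odd if $B$ is gr-odd and gr-even if $B$ is gr-even).
   Context: $A\otimes_{\mathbb{Q}}B$ carries the diagonal $G$-action and $\mathrm{Hom}_{\mathbb{Q}}(A,B)$ the conjugation action. A $\mathbb{Q}[G]$-module $M$ is odd if $\iota\cdot m=-m$ for all $m$, even if $\iota\cdot m=m$ for all $m$; it is gr-odd (resp. gr-even) if it has a finite filtration by $\mathbb{Q}[G]$-submodules $0=F_{-1}M\subseteq\cdots\subseteq F_kM=M$ with all quotients $F_{i+1}M/F_iM$ odd (resp. even). *)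

(* Defs.v *)
From HB Require Import structures.
From mathcomp Require Import all_boot all_order all_algebra.
From mathcomp Require Import boolp functions.
Set Implicit Arguments. Unset Strict Implicit. Unset Printing Implicit Defensive.
Import GRing.Theory.
Local Open Scope ring_scope.

Record group := Group {
  gcar :> Type;
  gmul : gcar -> gcar -> gcar;
  ginv : gcar -> gcar;
  gone : gcar;
  gmulA : forall x y z, gmul x (gmul y z) = gmul (gmul x y) z;
  gmul1 : forall x, gmul gone x = x;
  gmulV : forall x, gmul (ginv x) x = gone
}.

Definition qlinear (U V : lmodType rat) (f : U -> V) : Prop :=
  forall (a : rat) (u v : U), f (a *: u + v) = a *: f u + f v.

Definition is_QGaction (G : group) (V : lmodType rat) (act : G -> V -> V) : Prop :=
  [/\ forall g, qlinear (act g),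
      forall v, act (gone G) v = v
    & forall g h v, act (gmul g h) v = act g (act h v)].

Definition is_QGsubmod (G : group) (V : lmodType rat) (act : G -> V -> V)
    (S : V -> Prop) : Prop :=
  [/\ S 0,
      forall u v, S u -> S v -> S (u + v),
      forall (a : rat) v, S v -> S (a *: v)
    & forall g v, S v -> S (act g v)].

(* The Q[G]-module M (a submodule of the ambient space V, e.g. M = V) is
   gr-odd (odd = true) / gr-even (odd = false) with respect to iota:
   there is a filtration 0 = F 0 <= F 1 <= ... <= F k = M by Q[G]-submodules
   (F (i+1) here is F_i of the paper, F 0 is F_{-1} = 0) such that iota acts
   by -1 (resp. +1) on every quotient F (i+1) / F i, i.e.
   iota.m + m \in F i (resp. iota.m - m \in F i) for all m \in F (i+1). *)
Definition gr_parity (G : group) (iota : G) (V : lmodType rat)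
    (act : G -> V -> V) (M : V -> Prop) (odd : bool) : Prop :=
  exists (k : nat) (F : nat -> V -> Prop),
    [/\ forall n, (n <= k)%N -> is_QGsubmod act (F n),
        forall v, F 0%N v <-> v = 0,
        forall n v, (n < k)%N -> F n v -> F n.+1 v,
        forall v, F k v <-> M v
      & forall n v, (n < k)%N -> F n.+1 v ->
          F n (act iota v + (if odd then v else - v))].

Definition gr_odd (G : group) (iota : G) (V : lmodType rat)
    (act : G -> V -> V) (M : V -> Prop) := gr_parity iota act M true.
Definition gr_even (G : group) (iota : G) (V : lmodType rat)
    (act : G -> V -> V) (M : V -> Prop) := gr_parity iota act M false.

Definition qbilinear (A B W : lmodType rat) (f : A -> B -> W) : Prop :=
  (forall a, qlinear (f a)) /\ (forall b, qlinear (fun a => f a b)).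

Definition is_tensor_product (A B T : lmodType rat) (t : A -> B -> T) : Prop :=
  qbilinear t /\
  forall (W : lmodType rat) (f : A -> B -> W), qbilinear f ->
    exists h : T -> W, qlinear h /\ (forall a b, h (t a b) = f a b) /\
      forall h' : T -> W, qlinear h' -> (forall a b, h' (t a b) = f a b) ->
        forall x, h' x = h x.

Definition diagonal_action (G : group) (A B T : lmodType rat)
    (actA : G -> A -> A) (actB : G -> B -> B) (t : A -> B -> T)
    (actT : G -> T -> T) : Prop :=
  forall g, qlinear (actT g) /\
    forall a b, actT g (t a b) = t (actA g a) (actB g b).

(* Hom_Q(A,B) = the Q-linear maps inside the Q-vector space of all maps A -> B
   (pointwise structure), with the conjugation action (g.f)(a) = g (f (g^-1 a)). *)
Definition Hom_set (A B : lmodType rat) : (A -> B) -> Prop := fun f => qlinear f.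

Definition conj_action (G : group) (A B : lmodType rat)
    (actA : G -> A -> A) (actB : G -> B -> B) : G -> (A -> B) -> (A -> B) :=
  fun g f => fun a => actB g (f (actA (ginv g) a)).

Definition setT_ (V : Type) : V -> Prop := fun _ => True.

Definition finite_pred (T : Type) (P : T -> Prop) : Prop :=
  exists (n : nat) (f : 'I_n -> T), forall x, P x -> exists i, f i = x.

(* Main.v *)
Require Import Defs.
From HB Require Import structures.
From mathcomp Require Import all_boot all_order all_algebra.
From mathcomp Require Import boolp functions.
From mathcomp Require Import zify.
Local Open Scope ring_scope.
Import GRing.Theory.
Set Implicit Arguments. Unset Strict Implicit.

Section QL.
Variables (U V W : lmodType rat).

Lemma ql0 (f : U -> V) : qlinear f -> f 0 = 0.
Proof. move=> hf; have := hf (-1) 0 0; by rewrite scaler0 addr0 scaleN1r addNr. Qed.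
Lemma qlD (f : U -> V) : qlinear f -> forall u v, f (u + v) = f u + f v.
Proof. move=> hf u v; by have := hf 1 u v; rewrite !scale1r. Qed.
Lemma qlZ (f : U -> V) : qlinear f -> forall r u, f (r *: u) = r *: f u.
Proof. move=> hf r u; by have := hf r u 0; rewrite addr0 (ql0 hf) addr0. Qed.
Lemma qlN (f : U -> V) : qlinear f -> forall u, f (- u) = - f u.
Proof. move=> hf u; by rewrite -scaleN1r (qlZ hf) scaleN1r. Qed.
Lemma qlB (f : U -> V) : qlinear f -> forall u v, f (u - v) = f u - f v.
Proof. move=> hf u v; by rewrite (qlD hf) (qlN hf). Qed.
Lemma ql_comp (f : U -> V) (g : V -> W) : qlinear f -> qlinear g ->
  qlinear (fun x => g (f x)).
Proof. by move=> hf hg r u v; rewrite hf hg. Qed.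
Lemma ql_id : qlinear (fun x : U => x). Proof. by []. Qed.
Lemma ql_zero : qlinear (fun _ : U => (0 : V)).
Proof. by move=> r u v; rewrite scaler0 addr0. Qed.
Lemma ql_add (f g : U -> V) : qlinear f -> qlinear g -> qlinear (fun x => f x + g x).
Proof.
move=> hf hg r u v; rewrite hf hg scalerDr -!addrA; congr (_ + _).
by rewrite addrCA.
Qed.
Lemma ql_scale (f : U -> V) (c : rat) : qlinear f -> qlinear (fun x => c *: f x).
Proof. by move=> hf r u v; rewrite hf scalerDr !scalerA mulrC. Qed.
End QL.

Definition sgn (o : bool) : rat := if o then 1 else -1.
Lemma eS (V : lmodType rat) o (v : V) : (if o then v else - v) = sgn o *: v.
Proof. by case: o; rewrite /= ?scale1r ?scaleN1r. Qed.
Lemma sgnK o : sgn o * sgn o = 1.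
Proof. by case: o; rewrite /= ?mulr1 ?mulrNN ?mulr1. Qed.
Lemma sgn_addb a b : sgn (a (+) b) = - (sgn a * sgn b).
Proof. by case: a; case: b; rewrite /= ?mulr1 ?mulrN1 ?mulN1r ?opprK. Qed.

Lemma gmulVr (G : group) (x : G) : gmul x (ginv x) = gone G.
Proof.
rewrite -[gmul x _]gmul1 -[in gmul _ (gmul x _)](gmulV (ginv x)).
rewrite -gmulA (gmulA (ginv x)) gmulV gmul1 gmulV //.
Qed.

Section Sub.
Variables (G : group) (V : lmodType rat) (act : G -> V -> V) (S : V -> Prop).
Hypothesis hS : is_QGsubmod act S.
Lemma sub0 : S 0. Proof. by case: hS. Qed.
Lemma subD u v : S u -> S v -> S (u + v). Proof. by case: hS => _ h _ _; apply: h. Qed.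
Lemma subZ r v : S v -> S (r *: v). Proof. by case: hS => _ _ h _; apply: h. Qed.
Lemma subN v : S v -> S (- v). Proof. by move=> h; rewrite -scaleN1r; apply: subZ. Qed.
Lemma subB u v : S u -> S v -> S (u - v). Proof. by move=> h1 h2; apply: subD => //; apply: subN. Qed.
Lemma subA g v : S v -> S (act g v). Proof. by case: hS => _ _ _ h; apply: h. Qed.
End Sub.

Lemma filt_mono (V : lmodType rat) (k : nat) (F : nat -> V -> Prop) :
  (forall n v, (n < k)%N -> F n v -> F n.+1 v) ->
  forall m m' v, (m <= m')%N -> (m' <= k)%N -> F m v -> F m' v.
Proof.
move=> hst m m' v; elim: m' => [|m' IH].
  by rewrite leqn0 => /eqP -> .
rewrite leq_eqVlt => /orP [/eqP -> //|]; rewrite ltnS => hm hk Fm.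
by apply: hst => //; apply: IH => //; apply: ltnW.
Qed.

Section Tensor.
Variables (G : group) (iota : G) (A B : lmodType rat) (actA : G -> A -> A) (actB : G -> B -> B)
  (T : lmodType rat) (t : A -> B -> T) (actT : G -> T -> T).
Hypotheses (Ht : is_tensor_product t) (HT : diagonal_action actA actB t actT).

Lemma tlinr a : qlinear (t a). Proof. by case: Ht => [[]]. Qed.
Lemma tlinl b : qlinear (fun a => t a b). Proof. by case: Ht => [[]]. Qed.

Lemma tensor_par oA oB : gr_parity iota actA (@setT_ A) oA ->
  gr_parity iota actB (@setT_ B) oB -> gr_parity iota actT (@setT_ T) (oA (+) oB).
Proof.
move=> [kA [FA [FAs FA0 FAst FAk FAp]]] [kB [FB [FBs FB0 FBst FBk FBp]]].
pose Pn n y := exists i j a b, [/\ (i <= kA)%N, (j <= kB)%N, (i + j <= n)%N, FA i a /\ FB j b & y = t a b].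
exists (kA + kB)%N, (fun n x => forall (W : lmodType rat) (h : T -> W), qlinear h ->
   (forall y, Pn n y -> h y = 0) -> h x = 0).
split.
- move=> n _; split.
  + by move=> W h hl _; rewrite ql0.
  + by move=> u v hu hv W h hl hp; rewrite (qlD hl) hu // hv // addr0.
  + by move=> r v hv W h hl hp; rewrite (qlZ hl) hv // scaler0.
  + move=> g v hv W h hl hp.
    apply: (hv W (fun x => h (actT g x))); first exact: ql_comp (HT g).1 hl.
    move=> y [i [j [a [b [hi hj hij [ha hb] ->]]]]].
    rewrite (HT g).2; apply: hp; exists i, j, (actA g a), (actB g b); split => //; split.
    * exact: subA (FAs _ hi) _ _ ha.
    * exact: subA (FBs _ hj) _ _ hb.
- move=> v; split.
  + move=> hv; apply: (hv T id) => // y [i [j [a [b [hi hj hij [ha hb] ->]]]]].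
    move: hij; rewrite leqn0 addn_eq0 => /andP [/eqP ei _]; subst i.
    by move/FA0: ha => ->; rewrite (ql0 (tlinl b)).
  + by move=> -> W h hl _; rewrite ql0.
- move=> n v _ hv W h hl hp; apply: hv => // y [i [j [a [b [hi hj hij [ha hb] ->]]]]].
  by apply: hp; exists i, j, a, b; split => //; apply: leqW.
- move=> v; split => // _ W h hl hp.
  have hf : qbilinear (fun (_ : A) (_ : B) => (0 : W)) by split => ? ; apply: ql_zero.
  have [h0 [_ [_ hu]]] := Ht.2 W _ hf.
  transitivity (h0 v); last by symmetry; apply: (hu (fun _ => 0) (@ql_zero _ _)).
  apply: hu => // a b; apply: hp; exists kA, kB, a, b; split => //; split.
    by apply/FAk. by apply/FBk.
- move=> n x hn hx W h hl hp; rewrite eS.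
  apply: (hx W (fun y => h (actT iota y + sgn (oA (+) oB) *: y))).
    apply: ql_comp hl; apply: ql_add; [exact: (HT iota).1| exact: ql_scale].
  move=> y [i [j [a [b [hi hj hij [ha hb] ->]]]]].
  case: i hi hij ha => [|i] hi hij ha.
    by move/FA0: ha => ->; rewrite (ql0 (tlinl b)) (ql0 (HT iota).1) scaler0 addr0 ql0.
  case: j hj hij hb => [|j] hj hij hb.
    by move/FB0: hb => ->; rewrite (ql0 (tlinr a)) (ql0 (HT iota).1) scaler0 addr0 ql0.
  have ha' := FAp i a hi ha; have hb' := FBp j b hj hb.
  rewrite eS in ha'; rewrite eS in hb'.
  set a' := actA iota a + _ in ha'; set b' := actB iota b + _ in hb'.
  have ea : actA iota a = a' - sgn oA *: a by rewrite /a' addrK.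
  have eb : actB iota b = b' - sgn oB *: b by rewrite /b' addrK.
  rewrite (HT iota).2 ea eb.
  rewrite (qlB (tlinl _)) !(qlB (tlinr _)) (qlZ (tlinl _)) !(qlZ (tlinr _)).
  rewrite (qlZ (tlinl _)) sgn_addb. rewrite [sgn oB *: (_ *: _)]scalerA [sgn oB * _]mulrC scaleNr.
  have -> : forall (p q r s : T), p - q - (r - s) + - s = p - q - r.
    by move=> p q r s; rewrite opprB addrA addrAC addrK.
  rewrite (qlB hl) (qlB hl) !(qlZ hl) !hp ?scaler0 ?subr0 //.
  + exists i.+1, j, a, b'; split => //; lia.
  + exists i, j.+1, a', b; split => //; lia.
  + exists i, j, a', b'; split => //; lia.
Qed.
End Tensor.

Section Hom.
Variables (G : group) (iota : G) (A B : lmodType rat) (actA : G -> A -> A) (actB : G -> B -> B).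
Hypotheses (HA : is_QGaction actA) (HB : is_QGaction actB).

Lemma hom_par oA oB : gr_parity iota actA (@setT_ A) oA ->
  gr_parity iota actB (@setT_ B) oB ->
  gr_parity iota (conj_action actA actB) (@Hom_set A B) (oA (+) oB).
Proof.
move=> [kA [FA [FAs FA0 FAst FAk FAp]]] [kB [FB [FBs FB0 FBst FBk FBp]]].
have [linA act1A actMA] := HA; have [linB act1B actMB] := HB.
pose FB' m := FB (minn m kB).
have FB's m : is_QGsubmod actB (FB' m) by apply: FBs; apply: geq_minr.
have FB'mono m m' v : (m <= m')%N -> FB' m v -> FB' m' v.
  move=> hm; rewrite /FB' => hv; apply: (filt_mono FBst _ _ hv); last exact: geq_minr.
  by rewrite leq_min geq_minr andbT; apply: leq_trans hm; apply: geq_minl.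
have FB'0 v : FB' 0%N v -> v = 0 by rewrite /FB' min0n => /FB0.
have FB'top m v : (kB <= m)%N -> FB' m v by move=> hm; rewrite /FB' (minn_idPr hm); apply/FBk.
have FB'p m v : FB' m v -> FB' m.-1 (actB iota v + sgn oB *: v).
  case: m => [|m] /= hv.
    by move/FB'0: hv => ->; rewrite (ql0 (linB _)) scaler0 addr0; apply: sub0 (FB's 0%N).
  case: (ltnP m kB) => hm; last by apply: FB'top.
  by move: hv; rewrite /FB' (minn_idPl (ltnW hm)) (minn_idPl hm) => hv; rewrite -eS; apply: FBp.
have ginvK (a : A) : actA iota (actA (ginv iota) a) = a by rewrite -actMA gmulVr act1A.
pose D n (f : A -> B) := qlinear f /\ forall i a, (i <= kA)%N -> FA i a ->
   FB' (i + n - kA.+1)%N (f a).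
exists (kA + kB).+1, D; split.
- move=> n _; split.
  + split; first exact: ql_zero.
    by move=> i a _ _; apply: sub0 (FB's _).
  + move=> u v [hu1 hu2] [hv1 hv2]; split; first exact: ql_add.
    by move=> i a hi ha; apply: subD (FB's _) _ _ (hu2 _ _ hi ha) (hv2 _ _ hi ha).
  + move=> r v [hv1 hv2]; split; first exact: ql_scale.
    by move=> i a hi ha; apply: subZ (FB's _) _ _ (hv2 _ _ hi ha).
  + move=> g v [hv1 hv2]; split.
      rewrite /conj_action; apply: ql_comp (linB g); exact: ql_comp (linA _) hv1.
    move=> i a hi ha; rewrite /conj_action; apply: subA (FB's _) _ _ _.
    by apply: hv2 => //; apply: subA (FAs _ hi) _ _ ha.
- move=> f; split.
  + move=> [_ hf]; apply/funext => a; apply: FB'0.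
    have := hf kA a (leqnn _) (proj2 (FAk a) I).
    by have -> : (kA + 0 - kA.+1 = 0)%N by lia.
  + move=> ->; split; first exact: ql_zero.
    by move=> i a _ _; apply: sub0 (FB's _).
- move=> n f _ [hf1 hf2]; split => // i a hi ha.
  by apply: FB'mono (hf2 _ _ hi ha); lia.
- move=> f; split; first by case.
  move=> hf; split => // i a hi ha; apply: FB'top; lia.
- move=> n f hn [hf1 hf2]; rewrite eS; split.
    apply: ql_add; last exact: ql_scale.
    rewrite /conj_action; apply: ql_comp (linB _); exact: ql_comp (linA _) hf1.
  move=> i a hi ha; rewrite /conj_action /=.
  set a'' := actA (ginv iota) a.
  have ha'' : FA i a'' by apply: subA (FAs _ hi) _ _ ha.
  change (FB' (i + n - kA.+1)%N (actB iota (f a'') + sgn (oA (+) oB) *: f a)).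
  rewrite -(ginvK a) -/a''.
  case: i hi ha ha'' => [|i] hi ha ha''.
    move/FA0: ha'' => ->; rewrite (ql0 (linA _)) (ql0 hf1) (ql0 (linB _)).
    by rewrite scaler0 addr0; apply: sub0 (FB's _).
  have hx := FAp i a'' hi ha''; rewrite eS in hx.
  set x := actA iota a'' + _ in hx.
  have ex : actA iota a'' = x - sgn oA *: a'' by rewrite /x addrK.
  have hy := FB'p _ _ (hf2 _ _ hi ha'').
  set y := actB iota _ + _ in hy.
  have ey : actB iota (f a'') = y - sgn oB *: f a'' by rewrite /y addrK.
  have hfx := hf2 _ _ (ltnW hi) hx.
  rewrite ex ey (qlB hf1) (qlZ hf1) scalerBr scalerA sgn_addb.
  have -> : - (sgn oA * sgn oB) * sgn oA = - sgn oB.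
    by rewrite mulNr mulrC mulrA sgnK mul1r.
  rewrite !scaleNr.
  have -> : forall p q r : B, p - q + (- r - - q) = p - r.
    by move=> p q r; rewrite opprK [- r + q]addrC addrA addrNK.
  apply: subB (FB's _) _ _ _ _.
    by move: hy; congr (FB' _ _); lia.
  by apply: subZ (FB's _) _ _ _; move: hfx; congr (FB' _ _); lia.
Qed.
End Hom.

Theorem proposition3p4p4
  (G : group) (iota : G) (L : G -> Prop)
  (HL1 : L (gone G))
  (HLM : forall x y, L x -> L y -> L (gmul x y))
  (HLV : forall x, L x -> L (ginv x))
  (HLnormal : forall g x, L x -> L (gmul (gmul g x) (ginv g)))
  (HLfinite : finite_pred L)
  (Hcentral : forall g, L (gmul (gmul iota g) (gmul (ginv iota) (ginv g))))
  (A B : lmodType rat) (actA : G -> A -> A) (actB : G -> B -> B)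
  (HA : is_QGaction actA) (HB : is_QGaction actB)
  (T : lmodType rat) (t : A -> B -> T) (actT : G -> T -> T)
  (Ht : is_tensor_product t) (HT : diagonal_action actA actB t actT) :
  (gr_odd iota actA (@setT_ A) ->
     (gr_odd iota actB (@setT_ B) ->
        gr_even iota actT (@setT_ T) /\
        gr_even iota (conj_action actA actB) (@Hom_set A B)) /\
     (gr_even iota actB (@setT_ B) ->
        gr_odd iota actT (@setT_ T) /\
        gr_odd iota (conj_action actA actB) (@Hom_set A B))) /\
  (gr_even iota actA (@setT_ A) ->
     (gr_odd iota actB (@setT_ B) ->
        gr_odd iota actT (@setT_ T) /\
        gr_odd iota (conj_action actA actB) (@Hom_set A B)) /\
     (gr_even iota actB (@setT_ B) ->
        gr_even iota actT (@setT_ T) /\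
        gr_even iota (conj_action actA actB) (@Hom_set A B))).
Proof.
have P oA oB : gr_parity iota actA (@setT_ A) oA -> gr_parity iota actB (@setT_ B) oB ->
  gr_parity iota actT (@setT_ T) (oA (+) oB) /\
  gr_parity iota (conj_action actA actB) (@Hom_set A B) (oA (+) oB).
  move=> hA hB; split; [exact: (tensor_par Ht HT hA hB) | exact: (hom_par HA HB hA hB)].
split=> hA; split=> hB.
- exact: (P true true).
- exact: (P true false).
- exact: (P false true).
- exact: (P false false).
Qed.
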